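(* Let $f:\mathbb{R}^{d\times r}\to\mathbb{R}$ be a $\rho$-weakly convex function ($\rho\ge 0$), and suppose that $f$ is $L$-Lipschitz continuous on some bounded open convex set $\mathcal U\subseteq\mathbb{R}^{d\times r}$ containing $\mathcal M=\mathrm{St}(d,r)$. Then for every $\lambda\in\big(0,(\rho+3L)^{-1}\big)$, the proximal mapping $P_{\lambda f}$ is single-valued on $\mathcal M$, and for all $x,y\in\mathcal M$, $$\|P_{\lambda f}(x)-P_{\lambda f}(y)\|_F\le \frac{1}{1-\lambda(\rho+3L)}\,\|x-y\|_F .$$
   Context: $\mathcal M=\mathrm{St}(d,r)=\{x\in\mathbb{R}^{d\times r}: x^\top x=I_r\}$ with $d\ge r$, equipped with the Frobenius norm $\|\cdot\|_F$. A function $f$ is $\rho$-weakly convex if $f+\frac{\rho}{2}\|\cdot\|_F^2$ is convex. For $\lambda>0$ and $x\in\mathcal M$, the manifold Moreau envelope and proximal mapping are $f_\lambda(x)=\min_{y\in\mathcal M}\{f(y)+\frac{1}{2\lambda}\|y-x\|_F^2\}$ and $P_{\lambda f}(x)\in\arg\min_{y\in\mathcal M}\{f(y)+\frac{1}{2\lambda}\|y-x\|_F^2\}$ (a priori a set-valued mapping). *)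

(* Defs.v *)
From HB Require Import structures.
From mathcomp Require Import all_boot all_order all_algebra.
From mathcomp Require Import reals.
Set Implicit Arguments. Unset Strict Implicit. Unset Printing Implicit Defensive.
Import Order.TTheory GRing.Theory Num.Theory.
Local Open Scope ring_scope.

Section Defs.
Variable R : realType.
Variables d r : nat.
Notation Mat := 'M[R]_(d, r).

Definition frob (A : Mat) : R := Num.sqrt (\sum_(i < d) \sum_(j < r) A i j ^+ 2).

Definition stiefel (x : Mat) : Prop := x^T *m x = 1%:M.

Definition convex_fun (g : Mat -> R) : Prop :=
  forall (x y : Mat) (t : R), 0 <= t -> t <= 1 ->
    g ((1 - t) *: x + t *: y) <= (1 - t) * g x + t * g y.

Definition weakly_convex (rho : R) (f : Mat -> R) : Prop :=
  convex_fun (fun x => f x + rho / 2 * frob x ^+ 2).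

Definition convex_set (U : Mat -> Prop) : Prop :=
  forall (x y : Mat) (t : R), U x -> U y -> 0 <= t -> t <= 1 ->
    U ((1 - t) *: x + t *: y).

Definition open_set (U : Mat -> Prop) : Prop :=
  forall x, U x -> exists2 e : R, 0 < e & forall y, frob (y - x) < e -> U y.

Definition bounded_set (U : Mat -> Prop) : Prop :=
  exists B : R, forall x, U x -> frob x <= B.

Definition lipschitz_on (L : R) (U : Mat -> Prop) (f : Mat -> R) : Prop :=
  forall x y, U x -> U y -> `|f x - f y| <= L * frob (x - y).

Definition prox_set (lam : R) (f : Mat -> R) (x p : Mat) : Prop :=
  stiefel p /\
  forall y, stiefel y ->
    f p + (2 * lam)^-1 * frob (p - x) ^+ 2 <= f y + (2 * lam)^-1 * frob (y - x) ^+ 2.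

End Defs.

(* Main.v *)
From HB Require Import structures.
From mathcomp Require Import all_boot all_order all_algebra.
From mathcomp Require Import all_classical all_reals all_analysis.
From mathcomp Require Import lra ring.
From mathcomp Require Import reals.
Require Import Defs.
Import Order.TTheory GRing.Theory Num.Theory.
Import numFieldNormedType.Exports.
Local Open Scope ring_scope.
Set Implicit Arguments. Unset Strict Implicit. Unset Printing Implicit Defensive.

Section IP.
Variable R : realType.

Definition ip m n (A B : 'M[R]_(m, n)) : R := \tr (A^T *m B).

Lemma ipE m n (A B : 'M[R]_(m, n)) : ip A B = \sum_i \sum_j A i j * B i j.
Proof.
rewrite /ip /mxtrace exchange_big /=; apply: eq_bigr => j _.
rewrite mxE; apply: eq_bigr => i _; by rewrite mxE.
Qed.

Lemma ipC m n (A B : 'M[R]_(m, n)) : ip A B = ip B A.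
Proof. by rewrite /ip -mxtrace_tr trmx_mul trmxK. Qed.

Lemma ipDl m n (A B C : 'M[R]_(m, n)) : ip (A + B) C = ip A C + ip B C.
Proof. by rewrite /ip linearD /= mulmxDl mxtraceD. Qed.
Lemma ipDr m n (A B C : 'M[R]_(m, n)) : ip C (A + B) = ip C A + ip C B.
Proof. by rewrite /ip mulmxDr mxtraceD. Qed.
Lemma ipZl m n a (A C : 'M[R]_(m, n)) : ip (a *: A) C = a * ip A C.
Proof. by rewrite /ip linearZ /= -scalemxAl mxtraceZ. Qed.
Lemma ipZr m n a (A C : 'M[R]_(m, n)) : ip C (a *: A) = a * ip C A.
Proof. by rewrite /ip -scalemxAr mxtraceZ. Qed.
Lemma ipNl m n (A C : 'M[R]_(m, n)) : ip (- A) C = - ip A C.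
Proof. by rewrite -scaleN1r ipZl mulN1r. Qed.
Lemma ipNr m n (A C : 'M[R]_(m, n)) : ip C (- A) = - ip C A.
Proof. by rewrite -scaleN1r ipZr mulN1r. Qed.
Lemma ipBl m n (A B C : 'M[R]_(m, n)) : ip (A - B) C = ip A C - ip B C.
Proof. by rewrite ipDl ipNl. Qed.
Lemma ipBr m n (A B C : 'M[R]_(m, n)) : ip C (A - B) = ip C A - ip C B.
Proof. by rewrite ipDr ipNr. Qed.
Lemma ip0l m n (C : 'M[R]_(m, n)) : ip 0 C = 0.
Proof. by rewrite /ip trmx0 mul0mx mxtrace0. Qed.
Lemma ip0r m n (C : 'M[R]_(m, n)) : ip C 0 = 0.
Proof. by rewrite ipC ip0l. Qed.

Lemma ip_mulr m n k (A : 'M[R]_(m, n)) (B : 'M[R]_(m, k)) C :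
  ip A (B *m C) = ip (B^T *m A) C.
Proof. by rewrite /ip trmx_mul trmxK mulmxA. Qed.
Lemma ip_mulr2 m n k (A : 'M[R]_(m, n)) (B : 'M[R]_(m, k)) C :
  ip A (B *m C) = ip (A *m C^T) B.
Proof. by rewrite /ip trmx_mul trmxK mulmxA mxtrace_mulC mulmxA. Qed.

Lemma ip_ge0 m n (A : 'M[R]_(m, n)) : 0 <= ip A A.
Proof. rewrite ipE; apply: sumr_ge0 => i _; apply: sumr_ge0 => j _; by rewrite -expr2 sqr_ge0. Qed.

Lemma ip_eq0 m n (A : 'M[R]_(m, n)) : ip A A = 0 -> A = 0.
Proof.
rewrite ipE => /eqP; rewrite psumr_eq0; last first.
  by move=> i _; apply: sumr_ge0 => j _; by rewrite -expr2 sqr_ge0.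
move=> /allP H; apply/matrixP => i j; rewrite mxE.
have := H i (mem_index_enum _); rewrite psumr_eq0; last by move=> *; by rewrite -expr2 sqr_ge0.
move=> /allP /(_ j (mem_index_enum _)); by rewrite mulf_eq0 orbb => /eqP.
Qed.

Lemma frob_sq m n (A : 'M[R]_(m, n)) : frob A ^+ 2 = ip A A.
Proof.
rewrite /frob sqr_sqrtr ?ipE; last by apply: sumr_ge0 => i _; apply: sumr_ge0 => j _; exact: sqr_ge0.
by apply: eq_bigr => i _; apply: eq_bigr => j _; rewrite expr2.
Qed.

Lemma frob_ge0 m n (A : 'M[R]_(m, n)) : 0 <= frob A.
Proof. exact: sqrtr_ge0. Qed.

Lemma frobE m n (A : 'M[R]_(m, n)) : frob A = Num.sqrt (ip A A).
Proof. by rewrite -frob_sq sqrtr_sqr ger0_norm ?frob_ge0. Qed.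

Lemma frob_eq0 m n (A : 'M[R]_(m, n)) : frob A = 0 -> A = 0.
Proof. by move=> H; apply: ip_eq0; rewrite -frob_sq H expr0n. Qed.

Lemma frob0 m n : frob (0 : 'M[R]_(m, n)) = 0.
Proof. by rewrite frobE ip0l sqrtr0. Qed.

Lemma frobN m n (A : 'M[R]_(m, n)) : frob (- A) = frob A.
Proof. by rewrite !frobE ipNl ipNr opprK. Qed.

Lemma frobB m n (A B : 'M[R]_(m, n)) : frob (A - B) = frob (B - A).
Proof. by rewrite -frobN opprB. Qed.

Lemma frobZ m n a (A : 'M[R]_(m, n)) : frob (a *: A) = `|a| * frob A.
Proof.
by rewrite !frobE ipZl ipZr mulrA -expr2 sqrtrM ?sqr_ge0 // sqrtr_sqr.
Qed.

Lemma nonpos_aux (c k : R) : (forall s, 0 <= k - 2 * s * c) -> c <= 0.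
Proof.
move=> H; rewrite leNgt; apply/negP => c0.
have k0 : 0 <= k by have := H 0; rewrite mulr0 mul0r subr0.
have := H ((k + 1) / c); rewrite -mulrA divfK ?gt_eqF //.
apply/negP; rewrite -ltNge; lra.
Qed.

Lemma ip_CS m n (A B : 'M[R]_(m, n)) : ip A B <= frob A * frob B.
Proof.
set a := frob A; set b := frob B.
have key : forall s t : R, 0 <= (s * s) * ip A A - 2 * s * t * ip A B + (t * t) * ip B B.
  move=> s t; have := ip_ge0 (s *: A - t *: B).
  rewrite !ipBl !ipBr !ipZl !ipZr (ipC B A).
  by congr (0 <= _); ring.
have hA : ip A A = a ^+ 2 by rewrite frob_sq.
have hB : ip B B = b ^+ 2 by rewrite frob_sq.
have a0 : 0 <= a by exact: frob_ge0.
have b0 : 0 <= b by exact: frob_ge0.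
have [a00|ap] := eqVneq a 0.
  rewrite a00 mul0r; apply: (@nonpos_aux _ (b ^+ 2)) => s.
  have := key s 1; rewrite hA hB a00; congr (0 <= _); ring.
have [b00|bp] := eqVneq b 0.
  rewrite b00 mulr0; apply: (@nonpos_aux _ (a ^+ 2)) => s.
  have := key 1 s; rewrite hA hB b00; congr (0 <= _); ring.
have apos : 0 < a by rewrite lt0r ap.
have bpos : 0 < b by rewrite lt0r bp.
have := key b a; rewrite hA hB => h.
have hab : 0 < a * b by exact: mulr_gt0.
rewrite -(ler_pM2l hab); nra.
Qed.


Lemma ip_sq m n (A B : 'M[R]_(m, n)) : ip A B ^+ 2 <= ip A A * ip B B.
Proof.
have h1 := ip_CS A B; have h2 := ip_CS (- A) B.
rewrite ipNl frobN in h2.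
have a0 := frob_ge0 A; have b0 := frob_ge0 B.
rewrite -!frob_sq; nra.
Qed.

Lemma frob_le_ip m n k l (A : 'M[R]_(m, n)) (B : 'M[R]_(k, l)) :
  ip A A <= ip B B -> frob A <= frob B.
Proof. by move=> h; rewrite !frobE ler_wsqrtr. Qed.

Lemma frob_gram m n (B : 'M[R]_(m, n)) : frob (B^T *m B) <= frob B ^+ 2.
Proof.
suff h : frob (B^T *m B) ^+ 2 <= (frob B ^+ 2) ^+ 2.
  have := frob_ge0 (B^T *m B); have := frob_ge0 B; nra.
rewrite frob_sq [frob B ^+ 2]frob_sq.
pose c i := ip (col i B) (col i B).
have Hc : \sum_i c i = ip B B.
  rewrite [in RHS]ipE [in RHS]exchange_big /=; apply: eq_bigr => i _.
  rewrite /c ipE; by apply: eq_bigr => k _; rewrite big_ord1 !mxE.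
have He : forall i j, (B^T *m B) i j = ip (col i B) (col j B).
  move=> i j; rewrite mxE ipE; apply: eq_bigr => k _; by rewrite big_ord1 !mxE.
rewrite ipE expr2 -Hc mulr_suml; apply: ler_sum => i _.
rewrite mulr_sumr; apply: ler_sum => j _.
rewrite He -expr2; exact: ip_sq.
Qed.

Lemma frob_triangle m n (A B : 'M[R]_(m, n)) : frob (A + B) <= frob A + frob B.
Proof.
have a0 := frob_ge0 A; have b0 := frob_ge0 B.
rewrite -[X in _ <= X]ger0_norm ?addr_ge0 // -sqrtr_sqr frobE ler_wsqrtr //.
rewrite ipDl !ipDr (ipC B A) -!frob_sq; have := ip_CS A B; nra.
Qed.

Lemma ip_le_frob m n (A B : 'M[R]_(m, n)) : `|ip A B| <= frob A * frob B.
Proof. by rewrite ler_norml ip_CS andbT lerNl -ipNl -(frobN A) ip_CS. Qed.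

Lemma ip_st d r (p : 'M[R]_(d, r)) : stiefel p -> ip p p = r%:R.
Proof. by rewrite /stiefel /ip => ->; rewrite mxtrace1. Qed.

Lemma frob_st_mul d r k (p : 'M[R]_(d, r)) (A : 'M[R]_(r, k)) :
  stiefel p -> frob (p *m A) = frob A.
Proof. by move=> hp; rewrite !frobE ip_mulr mulmxA hp mul1mx. Qed.

Lemma frob_st_trmul d r k (p : 'M[R]_(d, r)) (A : 'M[R]_(d, k)) :
  stiefel p -> frob (p^T *m A) <= frob A.
Proof.
move=> hp; apply: frob_le_ip.
have := ip_ge0 (A - p *m (p^T *m A)).
rewrite !ipBl !ipBr (ipC (p *m _) A) ip_mulr (ip_mulr (p *m _)) mulmxA hp mul1mx.
lra.
Qed.

Section Cayley.
Variables (n : nat) (A : 'M[R]_n).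
Hypothesis skew : A^T = - A.

Lemma skew_unit_gen (B : 'M[R]_n) : B^T = - B -> (1%:M - B) \in unitmx.
Proof.
move=> hB.
rewrite unitmxE unitfE; apply/negP => /det0P [v vn0 hv]; move: vn0.
have e : v = v *m B by apply/eqP; rewrite -subr_eq0 -[X in X - _]mulmx1 -mulmxBr hv.
have : ip v v = - ip v v.
  rewrite {2}e ip_mulr2 hB mulmxN ipNl -e.
  by [].
move=> h; have : ip v v = 0 by lra.
by move/ip_eq0 => ->; rewrite eqxx.
Qed.

Lemma skew_unit : (1%:M - A) \in unitmx.
Proof. exact: skew_unit_gen. Qed.

Lemma cayley_contract k (M : 'M[R]_(n, k)) : frob (invmx (1%:M - A) *m M) <= frob M.
Proof.
set N := invmx (1%:M - A) *m M.
have eM : M = (1%:M - A) *m N by rewrite /N mulmxA mulmxV ?skew_unit // mul1mx.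
apply: frob_le_ip; rewrite [in X in _ <= X]eM mulmxBl mul1mx.
have h0 : ip N (A *m N) = 0.
  have : ip N (A *m N) = - ip N (A *m N).
    by rewrite {1}ip_mulr skew mulNmx ipNl ipC.
  lra.
rewrite !ipBl !ipBr h0 (ipC (A *m N) N) h0; have := ip_ge0 (A *m N); lra.
Qed.

Lemma skew_unit' : (1%:M + A) \in unitmx.
Proof.
have sk : (- A)^T = - - A by rewrite linearN /= skew.
by have := @skew_unit_gen (- A) sk; rewrite opprK.
Qed.

Definition cayley k (p : 'M[R]_(n, k)) := invmx (1%:M - A) *m ((1%:M + A) *m p).

Lemma cayley_orth k (p : 'M[R]_(n, k)) : p^T *m p = 1%:M -> (cayley p)^T *m cayley p = 1%:M.
Proof.
move=> hp.
have u1 := skew_unit; have u2 := skew_unit'.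
set C := invmx (1%:M - A) *m (1%:M + A).
have comm : (1%:M + A) *m (1%:M - A) = (1%:M - A) *m (1%:M + A).
  rewrite !(mulmxDl, mulmxDr, mulmxBl, mulmxBr, mul1mx, mulmx1, mulmxN, mulNmx).
  by apply/matrixP => i j; rewrite !mxE; ring.
have C2 : C = (1%:M + A) *m invmx (1%:M - A).
  symmetry; transitivity (invmx (1%:M - A) *m ((1%:M - A) *m (1%:M + A)) *m invmx (1%:M - A)).
    by rewrite mulmxA mulVmx // mul1mx.
  by rewrite -comm mulmxA -(mulmxA _ (1%:M - A)) mulmxV // mulmx1.
have sk : forall i j, A j i = - A i j.
  by move=> i j; have := congr1 (fun M : 'M[R]_n => M i j) skew; rewrite !mxE.
have tD : (1%:M + A)^T = 1%:M - A.
  by apply/matrixP => i j; rewrite !mxE sk eq_sym.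
have tB : (1%:M - A)^T = 1%:M + A.
  by apply/matrixP => i j; rewrite !mxE sk opprK eq_sym.
have CT : C^T = (1%:M - A) *m invmx (1%:M + A).
  by rewrite /C trmx_mul trmx_inv tD tB.
have e : cayley p = C *m p by rewrite /cayley /C mulmxA.
rewrite e trmx_mul -mulmxA (mulmxA C^T) CT C2.
rewrite -(mulmxA (1%:M - A)) (mulmxA (invmx _)) mulVmx // mul1mx mulmxV // mul1mx.
by rewrite hp.
Qed.

Lemma cayley_err k (p : 'M[R]_(n, k)) :
  cayley p - (p + (A *m p) *+ 2) = invmx (1%:M - A) *m ((A *m (A *m p)) *+ 2).
Proof.
have u1 := skew_unit.
set X := cayley p - (p + (A *m p) *+ 2).
have -> : X = invmx (1%:M - A) *m ((1%:M - A) *m X) by rewrite mulmxA mulVmx // mul1mx.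
congr (_ *m _).
rewrite /X /cayley mulmxBr (mulmxA (1%:M - A) (invmx _)) mulmxV // mul1mx.
rewrite !mulr2n !(mulmxDl, mulmxDr, mulmxBl, mulmxBr, mul1mx, mulmx1, mulNmx, mulmxN).
by apply/matrixP => i j; rewrite !mxE; ring.
Qed.
End Cayley.

Lemma lim_aux (X B C : R) : 0 <= C ->
  (forall t, 0 < t -> t <= 1 -> X <= B + t * C) -> X <= B.
Proof.
move=> C0 H; rewrite leNgt; apply/negP => hXB.
set e := X - B.
have e0 : 0 < e by rewrite subr_gt0.
have den0 : 0 < e + C + 1 by lra.
set t := e / (e + C + 1).
have ht : t * (e + C + 1) = e by rewrite /t divfK ?gt_eqF.
have t0 : 0 < t by rewrite /t divr_gt0.
have t1 : t <= 1 by rewrite /t ler_pdivrMr // mul1r; lra.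
have te : 0 < t * e by exact: mulr_gt0.
have := H t t0 t1; have he : e = X - B by []; move: ht te he; clearbody t e; lra.
Qed.

Lemma prox_close d r (f : 'M[R]_(d, r) -> R) L U lam x p :
  0 <= L -> 0 < lam -> (forall x, stiefel x -> U x) -> lipschitz_on L U f ->
  stiefel x -> prox_set lam f x p -> frob (p - x) <= 2 * lam * L.
Proof.
move=> L0 lam0 MU lip sx [sp hp].
have h := hp x sx; rewrite subrr frob0 expr0n /= mulr0 addr0 in h.
have hl := lip p x (MU p sp) (MU x sx).
have hl' : f x - f p <= L * frob (p - x).
  by apply: le_trans hl; rewrite distrC ler_norm.
set F := frob (p - x) in h hl' *.
have F0 : 0 <= F := frob_ge0 _.
have k0 : 0 < 2 * lam by lra.
have h2 : F ^+ 2 <= 2 * lam * L * F.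
  have : (2 * lam)^-1 * F ^+ 2 <= L * F by lra.
  rewrite -(ler_pM2l k0) mulrA mulfV ?gt_eqF // mul1r mulrA //.
have M0 : 0 <= 2 * lam * L by rewrite mulr_ge0 // mulr_ge0 // ltW.
move: h2 M0; set M := 2 * lam * L; clearbody M F; move=> h2 M0.
rewrite leNgt; apply/negP => hM.
have : M * F < F * F by rewrite ltr_pM2r //; lra.
rewrite -expr2 in h2 *; lra.
Qed.


Lemma one_sided d r (f : 'M[R]_(d, r) -> R) rho L U lam x p q :
  0 <= rho -> 0 <= L -> 0 < lam -> weakly_convex rho f -> convex_set U ->
  (forall x, stiefel x -> U x) -> lipschitz_on L U f ->
  stiefel x -> stiefel q -> prox_set lam f x p ->
  f p - f q <= (rho + 3 * L) / 2 * frob (p - q) ^+ 2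
               - frob (p - q) ^+ 2 / (2 * lam) - ip (q - p) x / lam.
Proof.
move=> rho0 L0 lam0 wc cU MU lip sx sq hprox.
have hpx := prox_close L0 lam0 MU lip sx hprox.
case: hprox => sp hp.
set D2 := frob (p - q) ^+ 2.
have D20 : 0 <= D2 by exact: sqr_ge0.
set K := 2^-1 *: (q^T *m p - p^T *m q).
set W := q *m p^T - p *m q^T + p *m K *m p^T.
set J := 2^-1 *: ((p - q)^T *m (p - q)).
have skK : K^T = - K.
  by rewrite /K linearZ /= linearB /= !trmx_mul !trmxK -scalerN opprB.
have skW : W^T = - W.
  rewrite /W !linearD /= !linearN /= !trmx_mul !trmxK skK.
  rewrite mulNmx mulmxN mulmxA; apply/matrixP => i j; rewrite !mxE; ring.
have e1 : (p - q)^T *m (p - q) = 1%:M - p^T *m q - q^T *m p + 1%:M.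
  have tpq : (p - q)^T = p^T - q^T by apply/matrixP => i j; rewrite !mxE.
  rewrite tpq mulmxBl !mulmxBr sp sq.
  by apply/matrixP => i j; rewrite !mxE; ring.
have hWp : W *m p = q - p + p *m J.
  rewrite /W /J e1 /K.
  rewrite !(mulmxDl, mulNmx) -!mulmxA sp !mulmx1 -!scalemxAr !(mulmxDr, mulmxN) !mulmx1.
  idtac.
  by apply/matrixP => i j; rewrite !mxE; field.
have hJ : frob J <= D2 / 2.
  rewrite /J frobZ ger0_norm ?invr_ge0 // mulrC; apply: ler_wpM2r; [by rewrite invr_ge0 | exact: frob_gram].
have hpJ : frob (p *m J) <= D2 / 2 by rewrite frob_st_mul.
have hipJ : D2 / 2 - lam * L * D2 <= ip (p *m J) x.
  rewrite ipC ip_mulr.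
  have -> : p^T *m x = 1%:M - p^T *m (p - x) by rewrite mulmxBr sp opprB addrC subrK.
  rewrite ipBl.
  have -> : ip 1%:M J = D2 / 2.
    by rewrite /J ipZr ip_mulr trmxK mulmx1 -frob_sq /D2; field.
  have hZ := ip_CS (p^T *m (p - x)) J.
  have hZ1 : frob (p^T *m (p - x)) <= 2 * lam * L := le_trans (frob_st_trmul _ sp) hpx.
  have : frob (p^T *m (p - x)) * frob J <= (2 * lam * L) * (D2 / 2).
    by apply: ler_pM => //; exact: frob_ge0.
  lra.
set c := frob (W *m (W *m p)) / 2.
have c0 : 0 <= c by rewrite divr_ge0 // frob_ge0.
set il := lam^-1.
have il0 : 0 <= il by rewrite invr_ge0 ltW.
have lamn0 : lam != 0 by rewrite gt_eqF.
set fx := frob x.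
have fx0 : 0 <= fx by exact: frob_ge0.
apply: (lim_aux (C := c * (L + fx * il))); first by rewrite mulr_ge0 // addr_ge0 // mulr_ge0.
move=> t t0 t1.
set A := (t / 2) *: W.
have skA : A^T = - A by rewrite /A linearZ /= skW scalerN.
set Y := cayley A p.
have sY : stiefel Y := cayley_orth skA sp.
have hAp : (A *m p) *+ 2 = t *: (W *m p).
  by rewrite /A -scalemxAl scalerMnl; congr (_ *: _); rewrite mulr2n; field.
set eps := Y - (p + t *: (W *m p)).
have heps : frob eps <= t ^+ 2 * c.
  rewrite /eps -hAp cayley_err //; apply: le_trans (cayley_contract skA _) _.
  have -> : (A *m (A *m p)) *+ 2 = (t ^+ 2 / 2) *: (W *m (W *m p)).
    rewrite /A -!scalemxAl -!scalemxAr !scalerA scalerMnl; congr (_ *: _).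
    by rewrite mulr2n; field.
  rewrite frobZ ger0_norm ?divr_ge0 ?sqr_ge0 //.
  by rewrite /c mulrAC mulrA.
have decomp : Y - p = t *: (q - p) + t *: (p *m J) + eps.
  rewrite /eps hWp; by apply/matrixP => i j; rewrite !mxE; ring.
set z := (1 - t) *: p + t *: q.
have Uz : U z := cU p q t (MU p sp) (MU q sq) (ltW t0) t1.
have dYz : Y - z = t *: (p *m J) + eps.
  have -> : Y = p + (t *: (q - p) + t *: (p *m J) + eps) by rewrite -decomp addrC subrK.
  by apply/matrixP => i j; rewrite /z !mxE; ring.
have fYz : f Y - f z <= L * frob (Y - z).
  by apply: le_trans (lip Y z (MU Y sY) Uz); rewrite ler_norm.
have nYz : frob (Y - z) <= t * (D2 / 2) + t ^+ 2 * c.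
  rewrite dYz; apply: le_trans (frob_triangle _ _) _; apply: lerD => //.
  rewrite frobZ ger0_norm; last exact: ltW.
  by apply: ler_wpM2l => //; exact: ltW.
have fYz' : f Y <= f z + L * (t * (D2 / 2) + t ^+ 2 * c).
  have := ler_wpM2l L0 nYz; lra.
have fz : f z <= (1 - t) * f p + t * f q + rho / 2 * (t * (1 - t) * D2).
  have := wc p q t (ltW t0) t1; rewrite -/z /=.
  have ez : frob z ^+ 2 = r%:R - t * (1 - t) * D2.
    rewrite /D2 !frob_sq /z !ipDl !ipDr !ipZl !ipZr ?ipBl ?ipBr ?ipNl ?ipNr (ipC q p) !ip_st //.
    ring.
  rewrite ez !frob_sq !ip_st //.
  move=> h; have : rho / 2 * (r%:R - t * (1 - t) * D2) = rho / 2 * r%:R - rho / 2 * (t * (1 - t) * D2) by ring.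
  have : (1 - t) * (f p + rho / 2 * r%:R) + t * (f q + rho / 2 * r%:R) = (1 - t) * f p + t * f q + rho / 2 * r%:R by ring.
  lra.
have hY := hp Y sY.
have eYx : frob (Y - x) ^+ 2 = frob (p - x) ^+ 2 - 2 * ip (Y - p) x.
  rewrite !frob_sq !ipBl !ipBr (ipC x Y) (ipC x p) (ip_st sY) (ip_st sp); ring.
have iYp : ip (Y - p) x = t * ip (q - p) x + t * ip (p *m J) x + ip eps x.
  by rewrite decomp [LHS]ipDl [in LHS]ipDl !ipZl.
have ieps : - ip eps x <= t ^+ 2 * c * fx.
  have := ip_le_frob eps x; rewrite -/fx => h.
  have : frob eps * fx <= t ^+ 2 * c * fx by apply: ler_wpM2r.
  have := ler_norm (- ip eps x); rewrite normrN; lra.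
have hk : (2 * lam)^-1 = il / 2 by rewrite invfM /il mulrC.
rewrite hk eYx in hY.
have hQ : t * (il * D2 / 2) - t * L * D2 <= il * (t * ip (p *m J) x).
  have := ler_wpM2l (mulr_ge0 il0 (ltW t0)) hipJ.
  have -> : il * t * (D2 / 2 - lam * L * D2) = t * (il * D2 / 2) - t * L * D2.
    by rewrite /il; field.
  by rewrite !mulrA.
have hE : il * (- ip eps x) <= il * (t ^+ 2 * c * fx) by apply: ler_wpM2l.
have hR : 0 <= rho * t ^+ 2 * D2 by rewrite mulr_ge0 // mulr_ge0 // sqr_ge0.
rewrite iYp in hY.
suff : t * (f p - f q) <= t * ((rho + 3 * L) / 2 * D2 - D2 / (2 * lam) - ip (q - p) x * il +
  t * (c * (L + fx * il))) by rewrite ler_pM2l.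
rewrite invfM -/il.
lra.
Qed.


Lemma prox_lip d r (f : 'M[R]_(d, r) -> R) rho L U lam x y p q :
  0 <= rho -> 0 <= L -> 0 < lam -> weakly_convex rho f -> convex_set U ->
  (forall x, stiefel x -> U x) -> lipschitz_on L U f ->
  lam * (rho + 3 * L) < 1 ->
  stiefel x -> stiefel y -> prox_set lam f x p -> prox_set lam f y q ->
  frob (p - q) <= (1 - lam * (rho + 3 * L))^-1 * frob (x - y).
Proof.
move=> rho0 L0 lam0 wc cU MU lip hl sx sy hp hq.
have h1 := one_sided rho0 L0 lam0 wc cU MU lip sx hq.1 hp.
have h2 := one_sided rho0 L0 lam0 wc cU MU lip sy hp.1 hq.
rewrite frobB in h2.
set F := frob (p - q) in h1 h2 *.
set G := frob (x - y).
have F0 : 0 <= F by exact: frob_ge0.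
have G0 : 0 <= G by exact: frob_ge0.
have hip : ip (p - q) (x - y) <= F * G by exact: ip_CS.
have eip : ip (q - p) x + ip (p - q) y = - ip (p - q) (x - y).
  rewrite !ipBl !ipBr; ring.
have lamn0 : lam != 0 by rewrite gt_eqF.
set kap := 1 - lam * (rho + 3 * L).
have kap0 : 0 < kap by rewrite /kap subr_gt0.
have key : kap * F ^+ 2 <= F * G.
  have : 0 <= (rho + 3 * L) * F ^+ 2 - F ^+ 2 / lam - (ip (q - p) x + ip (p - q) y) / lam.
    have -> : (rho + 3 * L) * F ^+ 2 - F ^+ 2 / lam - (ip (q - p) x + ip (p - q) y) / lam =
      ((rho + 3 * L) / 2 * F ^+ 2 - F ^+ 2 / (2 * lam) - ip (q - p) x / lam)
      + ((rho + 3 * L) / 2 * F ^+ 2 - F ^+ 2 / (2 * lam) - ip (p - q) y / lam).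
      by field.
    lra.
  rewrite eip => h.
  have := ler_wpM2l (ltW lam0) h; rewrite mulr0.
  have -> : lam * ((rho + 3 * L) * F ^+ 2 - F ^+ 2 / lam - - ip (p - q) (x - y) / lam)
     = ip (p - q) (x - y) - kap * F ^+ 2 by rewrite /kap; field.
  lra.
rewrite -(ler_pM2l kap0) mulrA mulfV ?gt_eqF // mul1r.
have [Fz|Fp] := eqVneq F 0; first by rewrite Fz mulr0.
have Fpos : 0 < F by rewrite lt0r Fp.
rewrite -(ler_pM2l Fpos); move: key; rewrite expr2; nra.
Qed.


Local Open Scope classical_set_scope.

Lemma st_entry d r (x : 'M[R]_(d, r)) i j : stiefel x -> `|x i j| <= 1.
Proof.
move=> sx; have := congr1 (fun M : 'M[R]_r => M j j) sx; rewrite !mxE eqxx /= => h.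
have : x i j * x i j <= \sum_(k < d) x^T j k * x k j.
  rewrite (bigD1 i) //= mxE lerDl; apply: sumr_ge0 => k _; rewrite mxE -expr2; exact: sqr_ge0.
rewrite h => hx; rewrite ler_norml; apply/andP; split; nra.
Qed.

Lemma vec_entry_le n m (u : 'rV[R]_(n * m)) i j : `|vec_mx u i j| <= `|u|.
Proof.
rewrite mxE.
by rewrite [leRHS]/Num.norm /= mx_normrE; apply/bigmax_geP; right => /=; exists (ord0, mxvec_index i j).
Qed.

Lemma frob_vec n m (u : 'rV[R]_(n * m)) : frob (vec_mx u) <= (n * m)%:R * `|u|.
Proof.
set N := (n * m)%:R; set M := `|u|.
have M0 : 0 <= M by exact: normr_ge0.
have N0 : 0 <= N by exact: ler0n.
have h1 : frob (vec_mx u) ^+ 2 <= N * M ^+ 2.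
  rewrite frob_sq ipE.
  apply: le_trans (_ : \sum_(i < n) \sum_(j < m) M ^+ 2 <= _).
    apply: ler_sum => i _; apply: ler_sum => j _.
    have := vec_entry_le u i j; rewrite ler_norml -/M => /andP[h1 h2]; nra.
  rewrite !sumr_const !card_ord -mulrnA /N mulrC mulr_natr mulnC.
  by [].
have hN : N <= N ^+ 2.
  rewrite /N; case: (n * m)%N => [|k]; first by rewrite expr0n /= lexx.
  rewrite expr2 ler_peMl // ?ler1n // ler0n.
have h2 : N * M ^+ 2 <= (N * M) ^+ 2 by rewrite exprMn ler_wpM2r // sqr_ge0.
have f0 := frob_ge0 (vec_mx u).
have := le_trans h1 h2; have NM0 : 0 <= N * M by exact: mulr_ge0.
move: NM0; set a := frob _; set b := N * M; clearbody a b => b0 h; nra.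
Qed.

Lemma vec_mxB n m (a b : 'rV[R]_(n * m)) : vec_mx (a - b) = vec_mx a - vec_mx b.
Proof. by apply/matrixP => i j; rewrite !mxE. Qed.

Lemma cont_sum_seq (T : topologicalType) (I : Type) (F : I -> T -> R) (s : seq I) :
  (forall k, continuous (F k)) -> continuous (fun v => \sum_(k <- s) F k v).
Proof.
move=> hF; elim: s => [|a s IH].
  have -> : (fun v => \sum_(k <- [::]) F k v) = (fun=> 0) by apply: funext => v; rewrite big_nil.
  by move=> v; exact: cst_continuous.
have -> : (fun v => \sum_(k <- a :: s) F k v) = F a + (fun v => \sum_(k <- s) F k v).
  by apply: funext => v; rewrite big_cons.
by move=> v; apply: continuousD; [exact: hF | exact: IH].
Qed.

Lemma stiefel_closed d r : closed [set v : 'rV[R]_(d * r) | stiefel (vec_mx v)].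
Proof.
have -> : [set v : 'rV[R]_(d * r) | stiefel (vec_mx v)] =
    \bigcap_(ij in [set: 'I_r * 'I_r])
       ((fun v : 'rV[R]_(d * r) => \sum_(k < d) v 0 (mxvec_index k ij.1) * v 0 (mxvec_index k ij.2))
         @^-1` [set x | x = (1%:M : 'M[R]_r) ij.1 ij.2]).
  apply/seteqP; split => v /=.
    move=> sv [i j] _ /=; rewrite -sv mxE; apply: eq_bigr => k _; by rewrite !mxE.
  move=> h; apply/matrixP => i j; rewrite -(h (i, j)) //= mxE; apply: eq_bigr => k _; by rewrite !mxE.
apply: closed_bigI => ij _.
apply: (proj1 (continuous_closedP _)); last exact: closed_eq.
apply: cont_sum_seq => k v; apply: continuousM; exact: coord_continuous.
Qed.

Lemma prox_exists d r (f : 'M[R]_(d, r) -> R) L U lam x :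
  0 <= L -> 0 < lam -> (forall x, stiefel x -> U x) -> lipschitz_on L U f ->
  stiefel x -> exists p, prox_set lam f x p.
Proof.
move=> L0 lam0 MU lip sx.
set S := [set v : 'rV[R]_(d * r) | stiefel (vec_mx v)].
set k := (2 * lam)^-1.
have k0 : 0 <= k by rewrite invr_ge0 mulr_ge0 // ltW.
set h := fun v : 'rV[R]_(d * r) => f (vec_mx v) + k * frob (vec_mx v - x) ^+ 2.
have S0 : S (mxvec x) by rewrite /S /= mxvecK.
set Kc := (L + k * (2 * frob x)) * (d * r)%:R.
have Kc0 : 0 <= Kc by rewrite mulr_ge0 // addr_ge0 // mulr_ge0 // mulr_ge0 // frob_ge0.
have hlip : forall a b, S a -> S b -> `|h a - h b| <= Kc * `|a - b|.
  move=> a b Sa Sb; rewrite /h.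
  set A := vec_mx a; set B := vec_mx b.
  have hf := lip A B (MU A Sa) (MU B Sb).
  have e : frob (A - x) ^+ 2 - frob (B - x) ^+ 2 = - (2 * ip (A - B) x).
    rewrite !frob_sq !ipBl !ipBr (ipC x A) (ipC x B) (ip_st Sa) (ip_st Sb); ring.
  have hi := ip_le_frob (A - B) x.
  have hv : frob (A - B) <= (d * r)%:R * `|a - b| by rewrite /A /B -vec_mxB frob_vec.
  have : `|f A + k * frob (A - x) ^+ 2 - (f B + k * frob (B - x) ^+ 2)| <=
         `|f A - f B| + k * (2 * (frob (A - B) * frob x)).
    have -> : f A + k * frob (A - x) ^+ 2 - (f B + k * frob (B - x) ^+ 2) =
      (f A - f B) + k * (frob (A - x) ^+ 2 - frob (B - x) ^+ 2) by ring.
    apply: le_trans (ler_normD _ _) _; apply: lerD => //.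
    rewrite normrM ger0_norm // e normrN normrM ger0_norm //; apply: ler_wpM2l => //.
    by apply: ler_wpM2l.
  move=> h1; apply: le_trans h1 _.
  have fA0 := frob_ge0 (A - B); have fx0 := frob_ge0 x.
  have : (L + k * (2 * frob x)) * frob (A - B) <= Kc * `|a - b|.
    by rewrite /Kc -mulrA; apply: ler_wpM2l => //; rewrite addr_ge0 // mulr_ge0 // mulr_ge0.
  nra.
have cont : {within S, continuous h}.
  apply/subspace_continuousP => v Sv; apply/cvgrPdist_lt => e e0.
  have d0 : 0 < e / (Kc + 1) by rewrite divr_gt0 // ltr_wpDl.
  have nb : \forall t \near v, `|v - t| < e / (Kc + 1).
    by apply/nbhs_normP; exists (e / (Kc + 1)).
  rewrite near_withinE; move: nb; apply: filterS => t hvt St /=.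
  apply: le_lt_trans (hlip _ _ Sv St) _.
  have : Kc * `|v - t| <= Kc * (e / (Kc + 1)) by apply: ler_wpM2l => //; exact: ltW.
  have : Kc * (e / (Kc + 1)) < e.
    rewrite mulrA ltr_pdivrMr; lra.
  lra.
have cS : compact S.
  apply: bounded_closed_compact; last exact: stiefel_closed.
  apply/ex_bound; first exact: (@globally_properfilter _ _ (mxvec x)).
  exists 1 => v Sv /=.
  rewrite [leLHS]/Num.norm /= mx_normrE; apply: bigmax_le => //= -[i kk] _.
  case/mxvec_indexP: kk => a b.
  have := st_entry a b Sv; by rewrite mxE (ord1 i).
have [c Sc cmin] := compact_EVT_min (ex_intro _ _ S0) cS cont.
rewrite inE in Sc.
exists (vec_mx c); split => // y sy.
have := cmin (mxvec y); rewrite inE /S /= mxvecK => /(_ sy).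
by rewrite /h mxvecK.
Qed.
End IP.

Theorem lemma4p1 (R : realType) (d r : nat) (f : 'M[R]_(d, r) -> R)
  (rho L : R) (U : 'M[R]_(d, r) -> Prop) :
  (r <= d)%N -> 0 <= rho -> 0 <= L -> weakly_convex rho f ->
  open_set U -> bounded_set U -> convex_set U ->
  (forall x, stiefel x -> U x) -> lipschitz_on L U f ->
  forall lam : R, 0 < lam -> lam * (rho + 3 * L) < 1 ->
    (forall x, stiefel x -> exists! p, prox_set lam f x p) /\
    (forall x y p q, stiefel x -> stiefel y -> prox_set lam f x p -> prox_set lam f y q ->
       frob (p - q) <= (1 - lam * (rho + 3 * L))^-1 * frob (x - y)).
Proof.
move=> hrd rho0 L0 wc oU bU cU MU lip lam lam0 hl; split.
  move=> x sx; have [p hp] := prox_exists L0 lam0 MU lip sx.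
  exists p; split => // p' hp'.
  have := prox_lip rho0 L0 lam0 wc cU MU lip hl sx sx hp hp'.
  rewrite subrr frob0 mulr0 => h.
  have h0 : frob (p - p') = 0 by apply/le_anti; rewrite h frob_ge0.
  by apply/eqP; rewrite -subr_eq0; apply/eqP; exact: frob_eq0.
move=> x y p q sx sy hp hq.
exact: (prox_lip rho0 L0 lam0 wc cU MU lip hl sx sy hp hq).
Qed.
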